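(* Suppose $U_1,\dots,U_N,V_1,\dots,V_n\in\mathbb{R}^d$ form a margin-$m$, relative-bias-$0$ embedding of $S_{n,k}$ with $0<m<1$. Then for every $T\subset[n]$ with $k\le|T|\le\min\bigl(k+\frac{2km}{1-m},\,n-1\bigr)$ there exist $h\in\mathbb{S}^{d-1}$ and $c\in\mathbb{R}$ such that $\langle h,V_i\rangle\ge c$ for all $i\in T$ and $\langle h,V_j\rangle\le c$ for all $j\notin T$.
   Context: $S_{n,k}\in\{0,1\}^{\binom{n}{k}\times n}$ (so $N=\binom nk$) is the matrix whose rows are all the distinct vectors in $\{0,1\}^n$ with exactly $k$ ones, each appearing exactly once. For $A\in\{0,1\}^{N\times n}$ and $m\ge0$, unit vectors $U_1,\dots,U_N,V_1,\dots,V_n\in\mathbb{R}^d$ form a margin-$m$, relative-bias-$0$ embedding of $A$ if $\langle U_j,V_i\rangle\ge m$ whenever $A_{ji}=1$ and $\langle U_j,V_i\rangle\le -m$ whenever $A_{ji}=0$. *)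

(* Defs.v *)
From HB Require Import structures.
From mathcomp Require Import all_boot all_order all_algebra.
From mathcomp Require Import reals.
Set Implicit Arguments. Unset Strict Implicit. Unset Printing Implicit Defensive.
Import Order.TTheory GRing.Theory Num.Theory.
Local Open Scope ring_scope.

Definition dotv (R : realType) (d : nat) (u v : 'rV[R]_d) : R :=
  \sum_(i < d) u 0 i * v 0 i.

Definition unitv (R : realType) (d : nat) (u : 'rV[R]_d) : Prop :=
  dotv u u = 1.

(* The rows of S_{n,k} are indexed by the k-subsets A of [n] = 'I_n, each
   exactly once; the row for A has a 1 exactly in the columns i \in A.
   Thus U is given as a family indexed by subsets A with #|A| = k
   (its values on other subsets are irrelevant), and V by columns 'I_n. *)
Definition Snk_entry (n : nat) (A : {set 'I_n}) (i : 'I_n) : bool := i \in A.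

Definition margin_embedding_Snk (R : realType) (d n k : nat) (m : R)
    (U : {set 'I_n} -> 'rV[R]_d) (V : 'I_n -> 'rV[R]_d) : Prop :=
  (forall A : {set 'I_n}, #|A| = k -> unitv (U A)) /\
  (forall i : 'I_n, unitv (V i)) /\
  (forall (A : {set 'I_n}) (i : 'I_n), #|A| = k ->
     (Snk_entry A i -> m <= dotv (U A) (V i)) /\
     (~~ Snk_entry A i -> dotv (U A) (V i) <= - m)).

(* Main.v *)
Require Import Defs.
From HB Require Import structures.
From mathcomp Require Import all_boot all_order all_algebra.
From mathcomp Require Import reals.
From mathcomp Require Import ring lra zify.
Import Order.TTheory GRing.Theory Num.Theory.
Local Open Scope ring_scope.

Lemma dotv_suml (R : realType) (d : nat) (I : finType) (P : pred I)
  (F : I -> 'rV[R]_d) v :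
  dotv (\sum_(a | P a) F a) v = \sum_(a | P a) dotv (F a) v.
Proof.
rewrite /dotv. under eq_bigr do rewrite summxE big_distrl.
by rewrite exchange_big.
Qed.

Lemma dotvZl (R : realType) (d : nat) (a : R) (u v : 'rV[R]_d) :
  dotv (a *: u) v = a * dotv u v.
Proof. rewrite /dotv mulr_sumr; apply: eq_bigr => l _; by rewrite mxE mulrA. Qed.

Lemma dotvZr (R : realType) (d : nat) (a : R) (u v : 'rV[R]_d) :
  dotv u (a *: v) = a * dotv u v.
Proof. rewrite /dotv mulr_sumr; apply: eq_bigr => l _; rewrite mxE; ring. Qed.

Lemma dotv_ge_m1 (R : realType) (d : nat) (u v : 'rV[R]_d) :
  unitv u -> unitv v -> -1 <= dotv u v.
Proof.
rewrite /unitv => Hu Hv.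
have H0 : 0 <= \sum_l (u 0 l + v 0 l) ^+ 2 by apply: sumr_ge0 => l _; exact: sqr_ge0.
have E : \sum_l (u 0 l + v 0 l) ^+ 2 = dotv u u + dotv v v + 2 * dotv u v.
  rewrite /dotv mulr_sumr -!big_split /=; apply: eq_bigr => l _; ring.
rewrite E Hu Hv in H0; lra.
Qed.

Theorem propositionG1 (R : realType) (d n k : nat) (m : R)
    (U : {set 'I_n} -> 'rV[R]_d) (V : 'I_n -> 'rV[R]_d) :
  margin_embedding_Snk k m U V ->
  0 < m < 1 ->
  forall T : {set 'I_n},
    (k <= #|T|)%N ->
    (#|T|%:R <= k%:R + 2 * k%:R * m / (1 - m) :> R) ->
    (#|T| <= n - 1)%N ->
    exists (h : 'rV[R]_d) (c : R),
      unitv h /\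
      (forall i : 'I_n, i \in T -> c <= dotv h (V i)) /\
      (forall j : 'I_n, j \notin T -> dotv h (V j) <= c).
Proof.
move=> [HU [HV HUV]] /andP[m0 m1] T kt Ht tn.
set t := #|T| in kt Ht tn *.
set P := [set A : {set 'I_n} | A \subset T & #|A| == k].
have cardP : #|P| = 'C(t, k) by rewrite cards_draws.
have Mpos : (0 < #|P|)%N by rewrite cardP bin_gt0.
have PE : forall A, A \in P -> #|A| = k by move=> A; rewrite inE => /andP[_ /eqP].
have [j0 j0T | noj] := pickP (fun j => j \notin T); last first.
  have /set0Pn [A0 A0P] : P != set0 by rewrite -card_gt0.
  exists (U A0), (-1); split; first exact: HU (PE _ A0P).
  split; first by move=> i _; apply: dotv_ge_m1; [exact: HU (PE _ A0P)| exact: HV].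
  by move=> j; rewrite noj.
set hp := \sum_(A in P) U A.
set M := #|P|.
have Mr : (0 : R) < M%:R by rewrite ltr0n.
have Hj : forall j, j \notin T -> dotv hp (V j) <= - (m * M%:R).
  move=> j jT; rewrite /hp dotv_suml.
  apply: (@le_trans _ _ (\sum_(A in P) (- m))).
    apply: ler_sum => A AP; apply: (proj2 (HUV A j (PE _ AP))).
    rewrite /Snk_entry; apply/negP => jA; move: AP; rewrite inE => /andP[/subsetP sAT _].
    by move: jT; rewrite sAT.
  rewrite sumr_const -mulr_natr; lra.
have Hi : forall i, i \in T -> - (m * M%:R) <= dotv hp (V i).
  move=> i iT; rewrite /hp dotv_suml.
  apply: (@le_trans _ _ (\sum_(A in P) (if i \in A then m else -1))); last first.
    apply: ler_sum => A AP; case: ifP => iA.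
      exact: (proj1 (HUV A i (PE _ AP))).
    apply: dotv_ge_m1; [exact: HU (PE _ AP)| exact: HV].
  rewrite (big_setID [set A : {set 'I_n} | i \in A]) /=.
  rewrite (eq_bigr (fun=> m)); last by move=> A; rewrite !inE => /andP[_ ->].
  rewrite [X in _ <= _ + X](eq_bigr (fun=> -1)); last first.
    by move=> A; rewrite !inE => /andP[/negbTE ->].
  rewrite !sumr_const.
  set n1 := #|P :&: _|; set n0 := #|P :\: _|.
  have EM : (n1 + n0)%N = M by rewrite cardsID.
  have E0 : n0 = 'C(t.-1, k).
    have tE : t.-1 = #|T :\ i| by rewrite /t (cardsD1 i T) iT.
    rewrite /n0 tE -cards_draws; apply: eq_card => A.
    rewrite !inE subsetD1; case: (i \in A); rewrite ?andbF ?andbT //=.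
  have tpos : (0 < t)%N by rewrite /t card_gt0; apply/set0Pn; exists i.
  have Et : (t * n0 = (t - k) * M)%N by rewrite E0 mul_bin_down /M cardP.
  have Et1 : (t * n1 = k * M)%N.
    apply/(@addIn ((t - k) * M)%N).
    by rewrite -{1}Et -mulnDr EM -mulnDl subnKC.
  have Et1R : (t%:R * n1%:R = k%:R * M%:R :> R) by rewrite -!natrM Et1.
  have EMR : (n1%:R + n0%:R = M%:R :> R) by rewrite -natrD EM.
  have h1m : (0 : R) < 1 - m by rewrite subr_gt0.
  have Ht' : (1 - m) * t%:R <= (1 + m) * k%:R.
    have := Ht; rewrite -(ler_pM2l h1m) mulrDr.
    have -> : (1 - m) * (2 * k%:R * m / (1 - m)) = 2 * k%:R * m.
      by rewrite mulrC divfK // gt_eqF.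
    move=> H; apply: (le_trans H); rewrite le_eqVlt; apply/orP; left; apply/eqP; ring.
  have tR : (0 : R) < t%:R by rewrite ltr0n.
  rewrite -[m *+ _]mulr_natr -[-1 *+ _]mulr_natr.
  have key : 0 <= M%:R * ((1 + m) * k%:R - (1 - m) * t%:R).
    by apply: mulr_ge0; [rewrite ler0n | rewrite subr_ge0].
  have : 0 <= t%:R * (m * n1%:R + (-1) * n0%:R + m * M%:R).
    have -> : t%:R * (m * n1%:R + (-1) * n0%:R + m * M%:R)
        = M%:R * ((1 + m) * k%:R - (1 - m) * t%:R) :> R.
      have n0E : (n0%:R = M%:R - n1%:R :> R) by rewrite -EMR; ring.
      rewrite n0E.
      transitivity ((1+m) * (t%:R * n1%:R) - (1-m)*t%:R*M%:R); first ring.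
      rewrite Et1R; ring.
    done.
  rewrite pmulr_rge0 //.
  by move=> H; rewrite -subr_ge0 opprK.
set s := dotv hp hp.
have s0 : 0 <= s by apply: sumr_ge0 => l _; rewrite -expr2 sqr_ge0.
have sne : s != 0.
  apply/eqP => s0'.
  have hz : forall l, hp 0 l = 0.
    move=> l; have /eqP : hp 0 l * hp 0 l = 0.
      by apply: (psumr_eq0P _ s0') => // l' _; rewrite -expr2 sqr_ge0.
    by rewrite mulf_eq0 orbb => /eqP.
  have := Hj j0 j0T; rewrite /dotv big1; last by move=> l _; rewrite hz mul0r.
  have : 0 < m * M%:R by rewrite mulr_gt0.
  by move=> H1; rewrite oppr_ge0 leNgt H1.
have spos : 0 < s by rewrite lt_def sne.
set a := (Num.sqrt s)^-1.
have a0 : 0 <= a by rewrite invr_ge0 sqrtr_ge0.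
exists (a *: hp), (a * - (m * M%:R)); split.
  rewrite /unitv dotvZl dotvZr mulrA -expr2 exprVn sqr_sqrtr // mulVf //.
split.
  by move=> i iT; rewrite dotvZl; apply: ler_wpM2l => //; apply: Hi.
by move=> j jT; rewrite dotvZl; apply: ler_wpM2l => //; apply: Hj.
Qed.
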